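(* Let $r\ge 1$, $n$ be integers and let $\sigma,\sigma':\mathbb{Z}_n\to\{0,1\}$ be configurations with $\mathrm{maj}_r(\sigma)=\sigma'$. If $i\in\mathbb{Z}_n$ satisfies $\sigma'(i)\ne\sigma'(i+1)$, then $\#_0(\sigma[[i-r+1,i+r]])=\#_1(\sigma[[i-r+1,i+r]])$, where $[i-r+1,i+r]=\Gamma_r(i)\cap\Gamma_r(i+1)$.
   Context: Cells are elements of $\mathbb{Z}_n$, arithmetic mod $n$; $[a,b]$ denotes the cyclic interval $a,a+1,\dots,b$ and $\Gamma_r(i)=[i-r,i+r]$. For a configuration $\sigma$ and $\beta\in\{0,1\}$, $\#_\beta(\sigma[I])$ counts cells $\ell\in I$ with $\sigma(\ell)=\beta$. The majority rule with radius $r$: $\mathrm{maj}_r(\sigma)(i)=0$ if $\#_0(\sigma[\Gamma_r(i)])>\#_1(\sigma[\Gamma_r(i)])$ and $=1$ otherwise. *)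

(* Defs.v *)
From mathcomp Require Import all_boot all_order all_algebra.
Set Implicit Arguments. Unset Strict Implicit. Unset Printing Implicit Defensive.

(* Cells are 'I_n, read as Z_n.  A configuration is a map 'I_n -> bool
   (false = 0, true = 1). *)
Definition config (n : nat) := 'I_n -> bool.

Definition cyc (n : nat) (x : int) : nat := `|(x %% (n%:Z))%Z|%N.

Definition cycI (n : nat) (s : int) (len : nat) : {set 'I_n} :=
  [set l : 'I_n | [exists j : 'I_len, (l : nat) == cyc n (s + (j : nat)%:Z)%R]].

Definition Gamma (n r : nat) (i : 'I_n) : {set 'I_n} :=
  cycI n ((i : nat)%:Z - r%:Z)%R (2 * r + 1).

Definition cnt (n : nat) (beta : bool) (sigma : config n) (I : {set 'I_n}) : nat :=
  #|[set l in I | sigma l == beta]|.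

Definition maj (n r : nat) (sigma : config n) : config n :=
  fun i => if cnt false sigma (Gamma r i) > cnt true sigma (Gamma r i)
           then false else true.

(* Main.v *)
Require Import Defs.
From mathcomp Require Import all_boot all_order all_algebra zify.
Import GRing.Theory Num.Theory.

Lemma cycE (n : nat) (s : int) (j : nat) : (0 < n)%N ->
  cyc n (s + j%:Z)%R = ((cyc n s + j) %% n)%N.
Proof.
move=> n0; rewrite /cyc.
have hn : (n%:Z != 0)%R by rewrite eqz_nat -lt0n.
have h := modz_ge0 s hn.
have -> : (s + j%:Z = (s %% n%:Z)%Z + j%:Z %[mod n%:Z])%Z by rewrite modzDml.
by rewrite -[X in (X + _)%R](gez0_abs h) -PoszD modz_nat.
Qed.

Lemma cyc_lt (n : nat) (s : int) : (0 < n)%N -> (cyc n s < n)%N.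
Proof.
move=> n0; rewrite /cyc.
have hn : (n%:Z != 0)%R by rewrite eqz_nat -lt0n.
have h := modz_ge0 s hn.
have h2 := ltz_pmod s (n0 : (0 < n%:Z)%R).
by rewrite -ltz_nat (gez0_abs h).
Qed.

Lemma memI (n : nat) (s : int) (len : nat) (l : 'I_n) : (0 < n)%N ->
  (l \in cycI n s len) = [exists j : 'I_len, (l : nat) == ((cyc n s + j) %% n)%N].
Proof. by move=> n0; rewrite inE; apply: eq_existsb => j; rewrite cycE. Qed.

Lemma cnt_sum n (sigma : config n) (X : {set 'I_n}) : cnt false sigma X + cnt true sigma X = #|X|.
Proof.
rewrite /cnt -(cardsID [set l | sigma l] X) addnC; congr (_ + _); apply: eq_card => l;
by rewrite !inE; case: (sigma l); rewrite ?andbT ?andbF.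
Qed.

Lemma cnt_mono n b (sigma : config n) (X Y : {set 'I_n}) : X \subset Y -> cnt b sigma X <= cnt b sigma Y.
Proof.
move=> h; apply: subset_leq_card; apply/subsetP => l; rewrite !inE.
by case/andP => /(subsetP h) -> ->.
Qed.

Lemma cnt_add1 n b (sigma : config n) (X Y : {set 'I_n}) (p : 'I_n) :
  Y \subset X :|: [set p] -> cnt b sigma Y <= cnt b sigma X + 1.
Proof.
move=> h; rewrite -(cards1 p); apply: leq_trans (leq_card_setU _ _).
apply: subset_leq_card; apply/subsetP => l; rewrite !inE.
case/andP => /(subsetP h); rewrite !inE => /orP [-> -> //| ->]; by rewrite orbT.
Qed.

Lemma cycI_full n s len : (0 < n)%N -> (n <= len)%N -> cycI n s len = setT.
Proof.
move=> n0 hl; apply/setP => l; rewrite memI // inE; apply/existsP.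
set c := cyc n s.
have hc : (c < n)%N by apply: cyc_lt.
have hj : (((l + (n - c)) %% n) < len)%N by apply: leq_trans (ltn_pmod _ n0) hl.
exists (Ordinal hj) => /=.
by rewrite modnDmr addnCA subnKC ?(ltnW hc) // modnDr modn_small.
Qed.

Lemma cycI_card n s len : (0 < n)%N -> (len <= n)%N -> #|cycI n s len| = len.
Proof.
move=> n0 hl.
pose f (j : 'I_len) : 'I_n := Ordinal (ltn_pmod (cyc n s + j) n0).
have -> : cycI n s len = f @: setT.
  apply/setP => l; rewrite memI //; apply/existsP/imsetP.
  - by case=> j /eqP hj; exists j => //; apply: val_inj.
  - by case=> j _ ->; exists j.
rewrite card_imset ?cardsT ?card_ord //.
move=> j k /(congr1 val) /= /eqP; rewrite eqn_modDl => /eqP.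
rewrite !modn_small; last by apply: leq_trans (ltn_ord _) hl.
  by move=> h; apply: val_inj.
by apply: leq_trans (ltn_ord _) hl.
Qed.

Section Aux.
Variables (n : nat) (n0 : (0 < n)%N).
Definition pc (s : int) : 'I_n := Ordinal (cyc_lt n s n0).

Lemma cycI_congr s s' len : cyc n s = cyc n s' -> cycI n s len = cycI n s' len.
Proof. by move=> h; apply/setP => l; rewrite !memI // h. Qed.

Lemma L1 s len : cycI n s len.+1 \subset cycI n (s + 1)%R len :|: [set pc s].
Proof.
apply/subsetP => l; rewrite memI // in_setU in_set1 memI // => /existsP [[[|k] hk] /= /eqP hl].
  by apply/orP; right; apply/eqP; apply: val_inj => /=; rewrite hl addn0 modn_small // cyc_lt.
apply/orP; left; apply/existsP; exists (Ordinal (hk : k < len)%N) => /=.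
by rewrite (cycE n s 1 n0) modnDml -addnA add1n hl.
Qed.

Lemma L2 s len : cycI n (s + 1)%R len \subset cycI n s len.+1.
Proof.
apply/subsetP => l; rewrite !memI // => /existsP [[k hk] /= /eqP hl].
apply/existsP; exists (Ordinal (hk : k.+1 < len.+1)%N) => /=.
by rewrite hl (cycE n s 1 n0) modnDml -addnA add1n.
Qed.

Lemma L3 s len : cycI n s len.+1 \subset cycI n s len :|: [set pc (s + len%:Z)%R].
Proof.
apply/subsetP => l; rewrite memI // in_setU in_set1 memI // => /existsP [[j hj] /= /eqP hl].
case: (ltnP j len) => hjl.
  by apply/orP; left; apply/existsP; exists (Ordinal hjl) => /=; rewrite hl.
have ej : j = len by apply/eqP; rewrite eqn_leq hjl -ltnS hj.
by apply/orP; right; apply/eqP; apply: val_inj => /=; rewrite hl (cycE n s len n0) ej.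
Qed.

Lemma L4 s len : cycI n s len \subset cycI n s len.+1.
Proof.
apply/subsetP => l; rewrite !memI // => /existsP [[k hk] /= /eqP hl].
by apply/existsP; exists (Ordinal (ltnW hk : k < len.+1)%N) => /=; rewrite hl.
Qed.
End Aux.

Theorem claim2 (n r : nat) (sigma sigma' : config n) (i : 'I_n) :
  (1 <= r)%N ->
  (forall j : 'I_n, sigma' j = maj r sigma j) ->
  sigma' i != sigma' (ordS i) ->
  (* [i-r+1, i+r], the 2r cells i-r+1, ..., i+r mod n *)
  cnt false sigma (cycI n ((i : nat)%:Z - r%:Z + 1)%R (2 * r))
  = cnt true sigma (cycI n ((i : nat)%:Z - r%:Z + 1)%R (2 * r)).
Proof.
move=> r1 hmaj hne.
have n0 : (0 < n)%N := leq_ltn_trans (leq0n i) (ltn_ord i).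
set I := cycI n _ (2 * r).
have eG : Gamma r i = cycI n ((i : nat)%:Z - r%:Z)%R (2 * r).+1 by rewrite /Gamma addn1.
have eG' : Gamma r (ordS i) = cycI n ((i : nat)%:Z - r%:Z + 1)%R (2 * r).+1.
  rewrite /Gamma addn1; apply: cycI_congr => //; rewrite /cyc; f_equal.
  apply/eqP; rewrite /ordS /= -modz_nat modzDml -addn1 PoszD addrAC //.
have GI : I \subset Gamma r i by rewrite eG; apply: L2.
have G'I : I \subset Gamma r (ordS i) by rewrite eG'; apply: L4.
have GU := @L1 n n0 ((i : nat)%:Z - r%:Z)%R (2 * r); rewrite -eG in GU.
have G'U := @L3 n n0 ((i : nat)%:Z - r%:Z + 1)%R (2 * r); rewrite -eG' in G'U.
case: (leqP n (2 * r)) => hn.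
  have IT : I = setT by apply: cycI_full.
  have e1 : Gamma r i = setT by apply/eqP; rewrite eqEsubset subsetT -IT.
  have e2 : Gamma r (ordS i) = setT by apply/eqP; rewrite eqEsubset subsetT -IT.
  by move: hne; rewrite !hmaj /maj e1 e2 eqxx.
have hc : #|I| = 2 * r by apply: cycI_card => //; apply: ltnW.
have hs := @cnt_sum n sigma I; rewrite hc in hs.
have a1 := @cnt_mono n false sigma _ _ GI. have a2 := @cnt_mono n true sigma _ _ GI.
have a3 := @cnt_mono n false sigma _ _ G'I. have a4 := @cnt_mono n true sigma _ _ G'I.
have b1 := @cnt_add1 n false sigma _ _ _ GU. have b2 := @cnt_add1 n true sigma _ _ _ GU.
have b3 := @cnt_add1 n false sigma _ _ _ G'U. have b4 := @cnt_add1 n true sigma _ _ _ G'U.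
move: hne; rewrite !hmaj /maj.
case: ifP => h1; case: ifP => h2 //= _; move: h1 h2; rewrite -/I in b1 b2 b3 b4 *; lia.
Qed.
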